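(* For the compromise min-max regret shortest path problem, for any fixed $s$-$t$ path $x\in\mathcal{X}$, the number of changepoints of $reg(x,\cdot)$ is bounded by the number of extreme efficient solutions of the bicriteria shortest path problem $\min \{ (\sum_{e\in E: x_e = 1} 2\hat{c}_e y_e,\ \sum_{e\in E} \hat{c}_e y_e) : y\in\mathcal{X}\}$, i.e., $|\overline{\Lambda}(x)| \le |\mathcal{E}|$, where $\mathcal{E}$ is the set of those extreme efficient solutions (solutions obtainable as optima of weighted-sum scalarizations).
   Context: Let $G=(V,E)$ be a graph and $\mathcal{X}\subseteq\{0,1\}^{E}$ the set of (incidence vectors of) simple $s$-$t$ paths in $G$. Nominal edge costs $\hat{c}\ge 0$ are given, and for $\lambda\in[0,1]$ the uncertainty set is $\mathcal{U}(\lambda)=\prod_{e\in E}[(1-\lambda)\hat{c}_e,(1+\lambda)\hat{c}_e]$. For a fixed path $x$, the regret is $reg(x,\lambda)=\max_{c\in\mathcal{U}(\lambda)} \big(c^t x - \min_{y\in\mathcal{X}} c^t y\big)$, which is a piecewise linear function of $\lambda$; $\overline{\Lambda}(x)\subseteq[0,1]$ denotes its set of changepoints. One has $reg(x,\lambda)=\sum_{e: x_e=1}(1+\lambda)\hat{c}_e - \min_{y\in\mathcal{X}}\big(\lambda\sum_{e:x_e=1}2\hat{c}_e y_e + (1-\lambda)\sum_{e\in E}\hat{c}_e y_e\big)$ up to sign conventions of the rewriting, so the inner minimization is a weighted sum of the two objectives of the bicriteria problem above. The compromise problem is $\min_{x\in\mathcal{X}} \int_0^1 reg(x,\lambda)\,d\lambda$.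 *)

(* Defs.v *)
From HB Require Import structures.
From mathcomp Require Import all_boot all_order all_algebra.
From mathcomp Require Import boolp classical_sets reals.
Set Implicit Arguments. Unset Strict Implicit. Unset Printing Implicit Defensive.
Import Order.TTheory GRing.Theory Num.Theory.
Local Open Scope ring_scope.
Local Open Scope classical_set_scope.

Section Graph.
Variables (V E : finType) (src dst : E -> V).

Fixpoint walk (u : V) (es : seq E) : bool :=
  if es is e :: es' then (src e == u) && walk (dst e) es' else true.

Definition simple_path (s t : V) (es : seq E) : bool :=
  [&& walk s es, last s (map dst es) == t & uniq (s :: map dst es)].

(* The set X of (incidence vectors, i.e. edge sets, of) simple s-t paths. *)
Definition st_paths (s t : V) : set {set E} :=
  [set x | exists es : seq E, simple_path s t es /\ x = [set e in es]].

End Graph.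

Section Regret.
Variables (R : realType) (E : finType).

Definition cost (c : E -> R) (y : {set E}) : R := \sum_(e in y) c e.

Definition unc_set (chat : E -> R) (lam : R) : set (E -> R) :=
  [set c | forall e, (1 - lam) * chat e <= c e <= (1 + lam) * chat e].

Definition regret (X : set {set E}) (chat : E -> R) (x : {set E}) (lam : R) : R :=
  sup [set cost c x - inf [set cost c y | y in X] | c in unc_set chat lam].

Definition changepoints (f : R -> R) : set R :=
  [set lam | 0 <= lam <= 1 /\
     ~ (exists eps a b : R, 0 < eps /\
          forall mu, 0 <= mu <= 1 -> `|mu - lam| < eps -> f mu = a * mu + b)].

Definition obj1 (chat : E -> R) (x y : {set E}) : R := \sum_(e in x :&: y) 2 * chat e.
Definition obj2 (chat : E -> R) (y : {set E}) : R := \sum_(e in y) chat e.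
Definition obj (chat : E -> R) (x y : {set E}) : R * R := (obj1 chat x y, obj2 chat y).

(* y is an extreme efficient solution: it is an optimum of a weighted-sum
   scalarization with strictly positive weights (lam, 1 - lam), and every other
   optimum of that scalarization has the same objective vector (so obj y is an
   extreme supported nondominated point). *)
Definition extreme_efficient (X : set {set E}) (chat : E -> R) (x y : {set E}) : Prop :=
  X y /\ exists lam : R, 0 < lam < 1 /\
    forall z, X z ->
      lam * obj1 chat x y + (1 - lam) * obj2 chat y
        <= lam * obj1 chat x z + (1 - lam) * obj2 chat z /\
      (lam * obj1 chat x z + (1 - lam) * obj2 chat z
         = lam * obj1 chat x y + (1 - lam) * obj2 chat y -> obj chat x z = obj chat x y).

(* The extreme efficient solutions, counted up to equal objective vectors
   (i.e. the set of extreme nondominated points). *)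
Definition extreme_points (X : set {set E}) (chat : E -> R) (x : {set E}) : set (R * R) :=
  [set obj chat x y | y in extreme_efficient X chat x].

End Regret.

(* Main.v *)
Require Import Defs.
From HB Require Import structures.
From mathcomp Require Import all_boot all_order all_algebra.
From mathcomp Require Import boolp classical_sets reals.
From mathcomp Require Import ring lra.
Import Order.TTheory GRing.Theory Num.Theory.
Local Open Scope ring_scope.
Local Open Scope classical_set_scope.
Set Implicit Arguments. Unset Strict Implicit.

Definition lv (R : realFieldType) (l : R * R) (mu : R) : R := l.1 * mu + l.2.

Section Lines.
Variable R : realFieldType.
Implicit Types (a b d s t m p q lam mu eps : R) (l k : R * R).

Definition mn a b : R := if a <= b then a else b.
Lemma mn_gt0 a b : 0 < a -> 0 < b -> 0 < mn a b.
Proof. by move=> ha hb; rewrite /mn; case: ifP. Qed.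
Lemma mn_l a b : mn a b <= a.
Proof. by rewrite /mn; case: (lerP a b) => // /ltW. Qed.
Lemma mn_r a b : mn a b <= b.
Proof. by rewrite /mn; case: (lerP a b). Qed.

Lemma small_lt d s t : 0 < d -> 0 <= t -> t < d / (`|s| + 1) -> s * t < d.
Proof.
move=> d0 t0 td.
have a0 : 0 <= `|s| := normr_ge0 s.
have sa : s <= `|s| := ler_norm s.
have h : t * (`|s| + 1) < d by rewrite -ltr_pdivlMr // ltr_wpDl.
nra.
Qed.

Lemma affine_between a b p q m : p <= m -> m <= q ->
  0 <= a * p + b -> 0 <= a * q + b -> 0 <= a * m + b.
Proof.
move=> pm mq hp hq.
have [a0|a0] := lerP 0 a.
- have : 0 <= a * (m - p) by apply: mulr_ge0; lra.
  rewrite mulrBr; lra.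
- have : 0 <= a * (m - q) by apply: mulr_le0; lra.
  rewrite mulrBr; lra.
Qed.

Lemma right_dom (ls : seq (R * R)) lam : ls != [::] ->
  exists2 l, l \in ls & exists eps, 0 < eps /\
    forall mu, lam <= mu -> mu < lam + eps -> forall k, k \in ls -> lv k mu <= lv l mu.
Proof.
elim: ls => [//|k0 rest IH] _.
case: (eqVneq rest [::]) => [->|/IH [l' l'in [eps' [eps'0 H']]]].
  exists k0; first by rewrite inE eqxx.
  exists 1; split => // mu _ _ k; rewrite inE => /eqP ->; exact: lexx.
set d := lv l' lam - lv k0 lam.
set s := k0.1 - l'.1.
have key : forall mu, lv l' mu - lv k0 mu = d - s * (mu - lam).
  by move=> mu; rewrite /d /s /lv; ring.
have [d0|d0|d0] := ltgtP 0 d.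
- exists l'; first by rewrite inE l'in orbT.
  exists (mn eps' (d / (`|s| + 1))); split.
    by rewrite mn_gt0 // divr_gt0 // ltr_wpDl.
  move=> mu h1 h2'.
  have h2 : mu < lam + eps'.
    by apply: (lt_le_trans h2'); rewrite lerD2l mn_l.
  have h3 : mu - lam < d / (`|s| + 1).
    by rewrite ltrBlDl; apply: (lt_le_trans h2'); rewrite lerD2l mn_r.
  move=> k; rewrite inE => /orP [/eqP ->|kin]; last exact: H'.
  have := small_lt d0 (_ : 0 <= mu - lam) h3.
  have := key mu; move=> e1 h; have := h ltac:(lra); lra.
- exists k0; first by rewrite inE eqxx.
  exists (mn eps' (- d / (`|- s| + 1))); split.
    by rewrite mn_gt0 // divr_gt0 ?oppr_gt0 // ltr_wpDl.
  move=> mu h1 h2'.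
  have h2 : mu < lam + eps'.
    by apply: (lt_le_trans h2'); rewrite lerD2l mn_l.
  have h3 : mu - lam < - d / (`|- s| + 1).
    by rewrite ltrBlDl; apply: (lt_le_trans h2'); rewrite lerD2l mn_r.
  have d0' : 0 < - d by rewrite oppr_gt0.
  have := small_lt d0' (_ : 0 <= mu - lam) h3.
  have := key mu; move=> e1 h; have {h}h := h ltac:(lra).
  move=> k; rewrite inE => /orP [/eqP ->|kin]; first exact: lexx.
  apply: (le_trans (H' _ h1 h2 _ kin)); lra.
- have [sle|sgt] := lerP s 0.
    exists l'; first by rewrite inE l'in orbT.
    exists eps'; split => // mu h1 h2 k; rewrite inE => /orP [/eqP ->|kin]; last exact: H'.
    have := key mu; rewrite -d0 => e1.
    have : s * (mu - lam) <= 0 by apply: mulr_le0_ge0 => //; lra.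
    lra.
  exists k0; first by rewrite inE eqxx.
  exists eps'; split => // mu h1 h2 k; rewrite inE => /orP [/eqP ->|kin]; first exact: lexx.
  apply: (le_trans (H' _ h1 h2 _ kin)).
  have := key mu; rewrite -d0 => e1.
  have : 0 <= s * (mu - lam) by apply: mulr_ge0; lra.
  lra.
Qed.
End Lines.

Lemma seq_min (R : realType) (T : eqType) (s : seq T) (h : T -> R) :
  s != [::] -> exists2 y, y \in s & forall z, z \in s -> h y <= h z.
Proof.
elim: s => [//|a s IH] _.
case: (eqVneq s [::]) => [->|/IH [y yin Hy]].
  by exists a; rewrite ?inE ?eqxx // => z; rewrite inE => /eqP ->.
have [ha|ha] := lerP (h a) (h y).
  exists a; first by rewrite inE eqxx.
  move=> z; rewrite inE => /orP [/eqP ->//|/Hy]; exact: le_trans.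
exists y; first by rewrite inE yin orbT.
move=> z; rewrite inE => /orP [/eqP ->|/Hy //]; exact: ltW.
Qed.

Lemma set_min (R : realType) (T : finType) (P : set T) (h : T -> R) t0 :
  P t0 -> exists y, P y /\ forall z, P z -> h y <= h z.
Proof.
move=> Pt0.
have ne : [seq y <- enum T | `[< P y >]] != [::].
  apply/eqP => e; have : t0 \in [seq y <- enum T | `[< P y >]].
    by rewrite mem_filter mem_enum andbT; apply/asboolP.
  by rewrite e.
have [y] := seq_min h ne; rewrite mem_filter => /andP [/asboolP Py _] H.
exists y; split => // z Pz; apply: H; rewrite mem_filter mem_enum andbT.
exact/asboolP.
Qed.

Section Reg.
Variables (R : realType) (E : finType) (X : set {set E}) (chat : E -> R).
Hypothesis chat_ge0 : forall e, 0 <= chat e.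
Variable x : {set E}.
Hypothesis Xx : X x.

Definition cstar (lam : R) (e : E) : R :=
  if e \in x then (1 + lam) * chat e else (1 - lam) * chat e.

Definition line (y : {set E}) : R * R :=
  (obj2 chat x - obj1 chat x y + obj2 chat y, obj2 chat x - obj2 chat y).

Lemma costE (c : E -> R) y : cost c y = \sum_e (if e \in y then c e else 0).
Proof. by rewrite /cost big_mkcond. Qed.

Lemma cstar_line lam y :
  cost (cstar lam) x - cost (cstar lam) y = lv (line y) lam.
Proof.
have ex : cost (cstar lam) x = (1 + lam) * obj2 chat x.
  by rewrite /cost /obj2 mulr_sumr; apply: eq_bigr => e ex; rewrite /cstar ex.
have o1 : obj1 chat x y = \sum_(e in y) (if e \in x then 2 * chat e else 0).
  rewrite /obj1 big_mkcond [RHS]big_mkcond /=; apply: eq_bigr => e _.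
  by rewrite finset.in_setI; case: (e \in x); case: (e \in y).
have ey : cost (cstar lam) y = (1 - lam) * obj2 chat y + lam * obj1 chat x y.
  rewrite o1 /cost /obj2 !mulr_sumr -big_split; apply: eq_bigr => e _.
  by rewrite /cstar /=; case: (e \in x); ring.
rewrite ex ey /lv /line /=; ring.
Qed.

Lemma cstar_dom lam c y : 0 <= lam -> unc_set chat lam c ->
  cost c x - cost c y <= cost (cstar lam) x - cost (cstar lam) y.
Proof.
move=> l0 Uc; rewrite !costE -!sumrB; apply: ler_sum => e _.
rewrite /cstar; have := Uc e; case: (e \in x); case: (e \in y) => /andP [h1 h2]; lra.
Qed.

Lemma cstar_unc lam : 0 <= lam -> unc_set chat lam (cstar lam).
Proof.
move=> l0 e; rewrite /cstar; have := chat_ge0 e; case: (e \in x) => h; apply/andP; split; nra.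
Qed.

Lemma inf_cost_min (c : E -> R) y : X y -> (forall z, X z -> cost c y <= cost c z) ->
  inf [set cost c z | z in X] = cost c y.
Proof.
move=> Xy Hy; apply/le_anti/andP; split.
  apply: ge_inf; first by exists (cost c y) => _ [z Xz <-]; exact: Hy.
  by exists y.
apply: lb_le_inf; first by exists (cost c y), y.
by move=> _ [z Xz <-]; exact: Hy.
Qed.

Lemma inf_cost (c : E -> R) : exists y, X y /\
  inf [set cost c z | z in X] = cost c y.
Proof.
have [y [Xy Hy]] := set_min (cost c) Xx.
by exists y; split => //; apply: inf_cost_min.
Qed.

Lemma regret_spec lam : 0 <= lam ->
  (forall y, X y -> lv (line y) lam <= regret X chat x lam) /\
  exists y, X y /\ regret X chat x lam = lv (line y) lam.
Proof.
move=> l0.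
have [ys [Xys Hys]] := set_min (fun y => cost (cstar lam) y) Xx.
set v := cost (cstar lam) x - cost (cstar lam) ys.
have ub : forall c, unc_set chat lam c -> cost c x - inf [set cost c z | z in X] <= v.
  move=> c Uc; have [yc [Xyc ->]] := inf_cost c.
  apply: (le_trans (cstar_dom yc l0 Uc)); rewrite /v lerD2l lerN2; exact: Hys.
have Sv : [set cost c x - inf [set cost c z | z in X] | c in unc_set chat lam] v.
  by exists (cstar lam); [exact: cstar_unc | rewrite (inf_cost_min Xys Hys)].
have ubS : ubound [set cost c x - inf [set cost c z | z in X] | c in unc_set chat lam] v.
  by move=> _ [c Uc <-]; exact: ub.
have reg : regret X chat x lam = v.
  rewrite /regret; apply/le_anti/andP; split; first exact: ge_sup (ex_intro _ v Sv) ubS.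
  by apply: sup_upper_bound => //; split; [exists v | exists v].
split.
  by move=> y Xy; rewrite reg /v -cstar_line lerD2l lerN2; exact: Hys.
by exists ys; split => //; rewrite reg -cstar_line.
Qed.
End Reg.

Section Main.
Variables (R : realType) (E : finType) (X : set {set E}) (chat : E -> R).
Hypothesis chat_ge0 : forall e, 0 <= chat e.
Variable x : {set E}.
Hypothesis Xx : X x.

Let F := regret X chat x.
Let ys := [seq y <- enum {set E} | `[< X y >]].
Let ls := map (line chat x) ys.

Lemma ls_ne : ls != [::].
Proof.
rewrite /ls; apply/eqP => /(congr1 size); rewrite size_map => /eqP; rewrite size_eq0 => /eqP e.
have : x \in ys by rewrite mem_filter mem_enum andbT; apply/asboolP.
by rewrite e.
Qed.

Lemma in_ls y : X y -> line chat x y \in ls.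
Proof. by move=> Xy; apply: map_f; rewrite mem_filter mem_enum andbT; apply/asboolP. Qed.

Lemma ls_in l : l \in ls -> exists y, X y /\ l = line chat x y.
Proof. by case/mapP => y; rewrite mem_filter => /andP [/asboolP Xy _] ->; exists y. Qed.

Definition rdomP lam y0 eps := 0 < eps /\ forall mu, lam <= mu -> mu < lam + eps ->
  forall y, X y -> lv (line chat x y) mu <= lv (line chat x y0) mu.

Lemma rdom lam : exists y0, X y0 /\ exists eps, rdomP lam y0 eps.
Proof.
have [l /ls_in [y0 [Xy0 ->]] [eps [eps0 H]]] := right_dom lam ls_ne.
exists y0; split => //; exists eps; split => // mu h1 h2 y Xy.
exact: H (in_ls Xy).
Qed.

Lemma ldom lam : exists y0, X y0 /\ exists eps, 0 < eps /\ forall mu, lam - eps < mu -> mu <= lam ->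
  forall y, X y -> lv (line chat x y) mu <= lv (line chat x y0) mu.
Proof.
have ne : map (fun l : R * R => (- l.1, l.2)) ls != [::].
  by apply: contra ls_ne => /eqP /(congr1 size); rewrite size_map => /eqP; rewrite size_eq0.
have [l2 /mapP [l /ls_in [y0 [Xy0 ->]] ->] [eps [eps0 H]]] := right_dom (- lam) ne.
exists y0; split => //; exists eps; split => // mu h1 h2 y Xy.
have := H (- mu) ltac:(rewrite lerN2 //) ltac:(lra) _ (map_f _ (in_ls Xy)).
by rewrite /lv /= !mulrNN.
Qed.

Lemma F_eq mu y0 : 0 <= mu -> X y0 ->
  (forall y, X y -> lv (line chat x y) mu <= lv (line chat x y0) mu) ->
  F mu = lv (line chat x y0) mu.
Proof.
move=> mu0 Xy0 H.
have [H1 [y1 [Xy1 e1]]] := regret_spec chat_ge0 Xx mu0.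
apply/le_anti/andP; split; last exact: H1.
by rewrite /F e1; apply: H.
Qed.

Lemma cp_open lam : changepoints F lam -> 0 < lam < 1.
Proof.
case=> /andP [l0 l1] ncp.
rewrite !lt_neqAle l0 l1 !andbT; apply/andP; split.
  apply/eqP => e; subst lam; apply: ncp.
  have [y0 [Xy0 [eps [eps0 H]]]] := rdom 0.
  exists eps, (line chat x y0).1, (line chat x y0).2; split => // mu /andP [m0 m1].
  rewrite ltr_distl => /andP [_ h]; apply: F_eq => //; apply: H => //; lra.
apply/eqP => e; subst lam; apply: ncp.
have [y0 [Xy0 [eps [eps0 H]]]] := ldom 1.
exists eps, (line chat x y0).1, (line chat x y0).2; split => // mu /andP [m0 m1].
rewrite ltr_distl => /andP [h _]; apply: F_eq => //; apply: H => //; lra.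
Qed.

Definition scal m y := m * obj1 chat x y + (1 - m) * obj2 chat y.

Lemma lv_scal m y : lv (line chat x y) m = (1 + m) * obj2 chat x - scal m y.
Proof. rewrite /lv /line /scal /=; ring. Qed.

Lemma affine_zero (a b p m q : R) : p < m -> m < q -> 0 <= a * p + b -> a * m + b = 0 ->
  0 <= a * q + b -> a = 0 /\ b = 0.
Proof.
move=> pm mq hp hm hq.
have h1 : a * (m - p) <= 0 by rewrite mulrBr; lra.
have h2 : 0 <= a * (q - m) by rewrite mulrBr; lra.
have a1 : a <= 0 by move: h1; rewrite pmulr_lle0 //; lra.
have a2 : 0 <= a by move: h2; rewrite pmulr_lge0 //; lra.
have a0 : a = 0 by apply/le_anti; rewrite a1 a2.
by subst a; split => //; lra.
Qed.

Lemma line_obj y z : line chat x y = line chat x z -> obj chat x y = obj chat x z.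
Proof.
case=> e1 e2; rewrite /obj; congr pair; lra.
Qed.

Lemma obj_line y z : obj chat x y = obj chat x z -> line chat x y = line chat x z.
Proof. by case=> e1 e2; rewrite /line e1 e2. Qed.

Lemma cp_ext lam y0 eps : changepoints F lam -> X y0 -> rdomP lam y0 eps ->
  extreme_efficient X chat x y0.
Proof.
move=> /cp_open /andP [l0 l1] Xy0 [eps0 H]; split => //.
set d := mn eps (1 - lam).
have d0 : 0 < d by rewrite mn_gt0 //; lra.
have d1 := mn_l eps (1 - lam); have d2 := mn_r eps (1 - lam); rewrite -/d in d1 d2.
exists (lam + d / 2); split; first by apply/andP; split; lra.
move=> z Xz.
have hm := H (lam + d / 2) ltac:(lra) ltac:(lra) z Xz.
split; first by move: hm; rewrite !lv_scal /scal; lra.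
move=> eq.
have e0 : lv (line chat x y0) (lam + d / 2) - lv (line chat x z) (lam + d / 2) = 0.
  by rewrite !lv_scal /scal; lra.
have hp := H lam (lexx _) ltac:(lra) z Xz.
have hq := H (lam + 3 * d / 4) ltac:(lra) ltac:(lra) z Xz.
have := @affine_zero ((line chat x y0).1 - (line chat x z).1) ((line chat x y0).2 - (line chat x z).2)
  lam (lam + d / 2) (lam + 3 * d / 4) ltac:(lra) ltac:(lra).
move: hp hq e0; rewrite /lv => hp hq e0.
case=> [|||a0 b0]; [lra|lra|lra|].
by apply: line_obj; case: (line chat x z) a0 b0 => [a b] /= a0 b0; apply/eqP; rewrite xpair_eqE; apply/andP; split; apply/eqP; lra.
Qed.

Lemma cp_inj l1 l2 y1 y2 e1 e2 : changepoints F l1 -> changepoints F l2 -> l1 < l2 ->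
  X y1 -> X y2 -> rdomP l1 y1 e1 -> rdomP l2 y2 e2 -> obj chat x y1 <> obj chat x y2.
Proof.
move=> c1 /[dup] c2 [_ ncp] lt12 Xy1 Xy2 [e10 H1] [e20 H2] /obj_line eq.
have /andP [a0 a1] := cp_open c1; have /andP [b0 b1] := cp_open c2.
set d1 := mn e1 (l2 - l1).
have d10 : 0 < d1 by rewrite mn_gt0 //; lra.
have d11 := mn_l e1 (l2 - l1); have d12 := mn_r e1 (l2 - l1); rewrite -/d1 in d11 d12.
set d2 := mn e2 (1 - l2).
have d20 : 0 < d2 by rewrite mn_gt0 //; lra.
have d21 := mn_l e2 (1 - l2); have d22 := mn_r e2 (1 - l2); rewrite -/d2 in d21 d22.
set m1 := l1 + d1 / 2; set m2 := l2 + d2 / 2.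
set del := mn (l2 - m1) (m2 - l2).
have del0 : 0 < del by rewrite mn_gt0 //; rewrite /m1 /m2; lra.
have dl1 := mn_l (l2 - m1) (m2 - l2); have dl2 := mn_r (l2 - m1) (m2 - l2); rewrite -/del in dl1 dl2.
apply: ncp; exists del, (line chat x y1).1, (line chat x y1).2; split => // mu /andP [mu0 mu1].
rewrite ltr_distl => /andP [h1 h2].
apply: F_eq => // y Xy.
have p1 := H1 m1 ltac:(rewrite /m1; lra) ltac:(rewrite /m1; lra) y Xy.
have p2 := H2 m2 ltac:(rewrite /m2; lra) ltac:(rewrite /m2; lra) y Xy.
rewrite -eq in p2.
move: p1 p2; rewrite /lv => p1 p2.
have := @affine_between _ ((line chat x y1).1 - (line chat x y).1) ((line chat x y1).2 - (line chat x y).2)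
  m1 m2 mu ltac:(lra) ltac:(lra) ltac:(lra) ltac:(lra).
lra.
Qed.

Let P := undup [seq obj chat x y | y <- enum {set E} & `[< extreme_efficient X chat x y >]].

Lemma P_mem p : (p \in P) <-> extreme_points X chat x p.
Proof.
rewrite mem_undup; split.
  by case/mapP => y; rewrite mem_filter => /andP [/asboolP ey _] ->; exists y.
by case=> y ey <-; apply: map_f; rewrite mem_filter mem_enum andbT; apply/asboolP.
Qed.

Lemma bound (L : seq R) : uniq L -> (forall l, l \in L -> changepoints F l) -> (size L <= size P)%N.
Proof.
move=> uL cL.
have [g Hg] := @choice R (R * R) (fun lam p => exists y0, [/\ X y0, p = obj chat x y0 &
  exists eps, rdomP lam y0 eps]) (fun lam =>
    let: ex_intro y0 (conj Xy0 H) := rdom lam in ex_intro _ (obj chat x y0) (ex_intro _ y0 (And3 Xy0 erefl H))).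
rewrite -(size_map g); apply: uniq_leq_size.
  rewrite map_inj_in_uniq // => a b ain bin gab.
  have [y1 [Xy1 g1 [e1 H1]]] := Hg a; have [y2 [Xy2 g2 [e2 H2]]] := Hg b.
  have ca := cL _ ain; have cb := cL _ bin.
  case: (ltgtP a b) => // ab; exfalso.
    by apply: (cp_inj ca cb ab Xy1 Xy2 H1 H2); rewrite -g1 -g2.
  by apply: (cp_inj cb ca ab Xy2 Xy1 H2 H1); rewrite -g1 -g2.
move=> p /mapP [a ain ->]; apply/P_mem.
have [y1 [Xy1 -> [e1 H1]]] := Hg a.
by exists y1 => //; apply: (cp_ext (cL _ ain) Xy1 H1).
Qed.

Lemma main_gen : exists (L : seq R) (P : seq (R * R)),
    [/\ uniq L, [set` L] = changepoints F,
        uniq P, [set` P] = extreme_points X chat x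
      & (size L <= size P)%N].
Proof.
pose Pn n := `[< exists L : seq R, [/\ uniq L, (forall l, l \in L -> changepoints F l) & size L = n] >].
have exP : exists n, Pn n by exists 0%N; apply/asboolP; exists [::].
have ubP : forall n, Pn n -> (n <= size P)%N.
  by move=> n /asboolP [L [uL cL <-]]; apply: bound.
case: (ex_maxnP exP ubP) => n /asboolP [L [uL cL sL]] maxn.
exists L, P; split.
- exact: uL.
- apply/seteqP; split => [l /= /cL //|l /= cl].
  case: (boolP (l \in L)) => // nl; exfalso.
  have : Pn n.+1 by apply/asboolP; exists (l :: L); split => //=; [rewrite nl uL | move=> k; rewrite inE => /orP [/eqP ->|/cL] | rewrite sL].
  by move/maxn; rewrite ltnn.
- exact: undup_uniq.
- by apply/seteqP; split => p /= /P_mem.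
- exact: bound.
Qed.

End Main.

Theorem lemma2 (R : realType) (V E : finType) (src dst : E -> V) (s t : V)
    (chat : E -> R) (chat_ge0 : forall e, 0 <= chat e)
    (x : {set E}) (hx : st_paths src dst s t x) :
  exists (L : seq R) (P : seq (R * R)),
    [/\ uniq L, [set` L] = changepoints (regret (st_paths src dst s t) chat x),
        uniq P, [set` P] = extreme_points (st_paths src dst s t) chat x
      & (size L <= size P)%N].
Proof. exact: (main_gen chat_ge0 hx). Qed.
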